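(* For all $\epsilon>0$ and $k\in\mathbb{N}$, let $d=d(\epsilon)=1280\epsilon^{-2}$ and $N=N(\epsilon,k)=1800k\epsilon^{-4}$. Let $D$ be a properly totally coloured digraph on at least $N$ vertices with rainbow vertex set. Then there is a subset $A\subseteq V(D)$ which is $(k,d)$-connected in $D$ (in the coloured sense) and satisfies $|A|\geq\delta^+(D)-\epsilon|D|$.
   Context: Digraphs are finite, without loops and without multiple edges (an edge may appear in both directions). A path is a sequence of distinct vertices $x_1,\dots,x_t$ with each $x_ix_{i+1}$ a directed edge; its length is its number of edges. A total colouring assigns a colour to every vertex and edge; it is proper if outgoing edges at any vertex have distinct colours, ingoing edges at any vertex have distinct colours, adjacent vertices have distinct colours, and every edge has a colour different from both its endpoints. $D$ has rainbow vertex set if all vertices have distinct colours. A path is rainbow if all its vertices and edges have pairwise distinct colours. A set $A\subseteq V(D)$ is $(k,d)$-connected in the totally coloured digraph $D$ if for every set $S$ of at most $k-1$ colours and all $x,y\in A$ there is a rainbow path from $x$ to $y$ of length at most $d$ none of whose edges, and none of whose vertices other than $x,y$, has a colour in $S$. $\delta^+(D)$ is the minimum out-degree, $|D|$ the number of vertices. *)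

(* Defs.v *)
From HB Require Import structures.
From mathcomp Require Import all_boot all_order all_algebra.
Set Implicit Arguments. Unset Strict Implicit. Unset Printing Implicit Defensive.

(* A total colouring with colours
   in nat is a vertex colouring cv and an edge colouring ce (ce x y is the
   colour of edge xy; its value on non-edges is irrelevant). *)

Definition digraph (V : finType) (e : rel V) : Prop := irreflexive e.

Definition proper_total_colouring (V : finType) (e : rel V)
    (cv : V -> nat) (ce : V -> V -> nat) : Prop :=
  [/\ (forall x y z, e x y -> e x z -> y != z -> ce x y != ce x z),
      (forall x y z, e y x -> e z x -> y != z -> ce y x != ce z x),
      (forall x y, e x y -> cv x != cv y) &
      (forall x y, e x y -> (ce x y != cv x) && (ce x y != cv y))].

Definition rainbow_vertex_set (V : finType) (cv : V -> nat) : Prop :=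
  injective cv.

(* The path x :: p (vertices x, p_1, ..., p_t), of length size p. *)
Definition is_path (V : finType) (e : rel V) (x : V) (p : seq V) : bool :=
  path e x p && uniq (x :: p).

Definition path_vcols (V : finType) (cv : V -> nat) (x : V) (p : seq V) :=
  map cv (x :: p).
Definition path_ecols (V : finType) (ce : V -> V -> nat) (x : V) (p : seq V) :=
  pairmap ce x p.

Definition rainbow_path (V : finType) (cv : V -> nat) (ce : V -> V -> nat)
    (x : V) (p : seq V) : bool :=
  uniq (path_vcols cv x p ++ path_ecols ce x p).

Definition interior (V : finType) (x : V) (p : seq V) : seq V :=
  behead (belast x p).

(* A is (k,d)-connected: for every set S of at most k-1 colours (a sequence of
   length < k) and x, y in A, there is a rainbow path from x to y of length at
   most d whose edges and interior vertices avoid the colours in S. *)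
Definition kd_connected (R : realFieldType) (V : finType) (e : rel V)
    (cv : V -> nat) (ce : V -> V -> nat) (k : nat) (d : R) (A : {set V}) : Prop :=
  forall (S : seq nat) (x y : V), size S < k -> x \in A -> y \in A ->
    exists p : seq V,
      [/\ is_path e x p, last x p = y, rainbow_path cv ce x p,
          ((size p)%:R <= d)%R &
          all (fun c => c \notin S) (path_ecols ce x p) &&
          all (fun v => cv v \notin S) (interior x p)].

Definition outdeg (V : finType) (e : rel V) (v : V) : nat := #|[set w | e v w]|.

(* minimum out-degree; 0 for the empty digraph *)
Definition min_outdeg (V : finType) (e : rel V) : nat :=
  \big[minn/#|V|]_(v : V) outdeg e v.

(* Main.v *)
Require Import Defs.
From HB Require Import structures.
From mathcomp Require Import all_boot all_order all_algebra.
From mathcomp Require Import ring lra zify.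
Import Order.TTheory GRing.Theory Num.Theory.
Set Implicit Arguments. Unset Strict Implicit. Unset Printing Implicit Defensive.

Section Paths.
Variables (V : finType) (e : rel V) (cv : V -> nat) (ce : V -> V -> nat).
Hypothesis Hprop : proper_total_colouring e cv ce.
Hypothesis Hinj : injective cv.

Definition cols (u : V) (r : seq V) := map cv (u :: r) ++ pairmap ce u r.

Lemma cols_perm a u r : perm_eq (cols a (u :: r)) (cv a :: ce a u :: cols u r).
Proof.
rewrite /cols /= perm_cons.
by apply/permPl; exact: (perm_catCA (cv u :: map cv r) [:: ce a u] (pairmap ce u r)).
Qed.

Lemma card_inj_mem (f : V -> nat) (P : pred V) (F : seq nat) :
  {in P &, injective f} -> #|[set a | P a && (f a \in F)]| <= size F.
Proof.
move=> Hf; rewrite cardE -(size_map f).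
apply: uniq_leq_size.
  rewrite map_inj_in_uniq ?enum_uniq // => a b.
  rewrite !mem_enum !inE => /andP[Pa _] /andP[Pb _]; exact: Hf.
by move=> c /mapP[a]; rewrite mem_enum inE => /andP[_ Ha] ->.
Qed.

Lemma inj_in_edge u : {in (fun a => e a u) &, injective (fun a => ce a u)}.
Proof.
case: Hprop => _ H2 _ _ a b Ha Hb Heq; apply/eqP/negPn/negP => Hab.
by move: (H2 u a b Ha Hb Hab); rewrite Heq eqxx.
Qed.

Lemma inj_out_edge x : {in (fun a => e x a) &, injective (fun a => ce x a)}.
Proof.
case: Hprop => H1 _ _ _ a b Ha Hb Heq; apply/eqP/negPn/negP => Hab.
by move: (H1 x a b Ha Hb Hab); rewrite Heq eqxx.
Qed.

Definition Inv (x y : V) (S : seq nat) (u : V) (r : seq V) : Prop :=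
  [/\ path e u r, last u r = y, uniq (cols u r), cv x \notin cols u r &
      all (fun c => c \notin S) (pairmap ce u r) &&
      all (fun v => cv v \notin S) (belast u r)].

Definition Fb (x : V) (S : seq nat) (u : V) (r : seq V) := S ++ cv x :: cols u r.

Lemma size_Fb x S u r : size (Fb x S u r) = (size S + 2 + 2 * size r)%N.
Proof. rewrite /Fb /cols size_cat /= size_cat size_map size_pairmap; lia. Qed.

Lemma mem_Fb x S u r c :
  (c \in Fb x S u r) = [|| c \in S, c == cv x | c \in cols u r].
Proof. by rewrite /Fb mem_cat in_cons. Qed.

Lemma mem_cols_cons a u r c :
  (c \in cols a (u :: r)) = [|| c == cv a, c == ce a u | c \in cols u r].
Proof. by rewrite (perm_mem (cols_perm a u r)) in_cons (in_cons (ce a u)). Qed.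

Lemma uniq_cols_cons a u r :
  uniq (cols a (u :: r)) = [&& cv a \notin ce a u :: cols u r, ce a u \notin cols u r & uniq (cols u r)].
Proof. by rewrite (perm_uniq (cols_perm a u r)) (cons_uniq (cv a)) (cons_uniq (ce a u)). Qed.

Lemma Inv_step x y S u r a :
  Inv x y S u r -> e a u -> cv a \notin Fb x S u r -> ce a u \notin Fb x S u r ->
  Inv x y S a (u :: r).
Proof.
case=> Hp Hl Hu Hx /andP[Hs Hb] Hau.
rewrite !mem_Fb => /norP[Sa /norP[xa ca]] /norP[Sc /norP[xc cc]].
have Hpr := Hprop; case: Hpr => _ _ _ H4.
have /andP[c1 c2] := H4 _ _ Hau.
split.
- by rewrite /= Hau.
- by [].
- rewrite uniq_cols_cons in_cons Hu cc (negbTE ca) eq_sym (negbTE c1) //.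
- rewrite mem_cols_cons eq_sym (negbTE xa) eq_sym (negbTE xc) /=; exact: Hx.
- by rewrite /= Sc Hs Sa.
Qed.

Lemma Inv_close x y S u r a :
  Inv x y S u r -> e a u -> e x a ->
  cv a \notin Fb x S u r -> ce a u \notin Fb x S u r ->
  ce x a \notin Fb x S u r -> ce x a != ce a u ->
  [/\ is_path e x (a :: u :: r), last x (a :: u :: r) = y,
      rainbow_path cv ce x (a :: u :: r) &
      all (fun c => c \notin S) (path_ecols ce x (a :: u :: r)) &&
      all (fun v => cv v \notin S) (interior x (a :: u :: r))].
Proof.
move=> HI Hau Hxa Ha Hc Hx Hne.
have HI' := Inv_step HI Hau Ha Hc.
case: HI' => Hp Hl Hu Hxc /andP[Hs Hb].
move: Hx; rewrite mem_Fb => /norP[Sx /norP[xx cx]].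
have Hpr := Hprop; case: Hpr => _ _ _ H4.
have /andP[d1 d2] := H4 _ _ Hxa.
have Hrb : uniq (cols x (a :: u :: r)).
  rewrite uniq_cols_cons Hu andbT in_cons (eq_sym (cv x)) (negbTE d1) orFb Hxc mem_cols_cons.
  by rewrite (negbTE d2) (negbTE Hne) (negbTE cx).
split => //.
- rewrite /is_path /= Hxa Hau.
  case: HI => -> _ _ _ _ /=.
  have : uniq (map cv (x :: a :: u :: r)).
    by move: Hrb; rewrite /cols cat_uniq => /andP[].
  by rewrite (map_inj_uniq Hinj).
- move: Hs Hb => /= /andP[-> ->] /andP[-> ->].
  by rewrite Sx.
Qed.

End Paths.
Section Count.
Variables (V : finType) (e : rel V).

Definition innb (T : {set V}) (w : V) := #|[set a in T | e a w]|.

Lemma card_sum (Q : {set V}) (P : pred V) :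
  #|[set w in Q | P w]| = \sum_(w in Q) (P w : nat).
Proof.
rewrite -sum1_card (eq_bigl (fun w => (w \in Q) && P w)); last by move=> w; rewrite inE.
by rewrite big_mkcondr; apply: eq_bigr => w _; case: (P w).
Qed.

Lemma dcount (P Q : {set V}) :
  \sum_(v in P) #|[set w in Q | e v w]| = \sum_(w in Q) innb P w.
Proof.
rewrite /innb.
under eq_bigr do rewrite card_sum.
under [RHS]eq_bigr do rewrite card_sum.
exact: exchange_big.
Qed.

Lemma outdeg_split v (M : {set V}) :
  outdeg e v = (#|[set w in M | e v w]| + #|[set w in ~: M | e v w]|)%N.
Proof.
rewrite /outdeg -(cardsID M [set w | e v w]); congr (_ + _)%N; apply: eq_card => w;
by rewrite !inE andbC.
Qed.

Lemma min_outdeg_le v : (min_outdeg e <= outdeg e v)%N.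
Proof.
have H : forall s : seq V, v \in s ->
    (\big[minn/#|V|]_(i <- s) outdeg e i <= outdeg e v)%N.
  elim => [//|a s IH]; rewrite in_cons big_cons => /orP[/eqP->|H].
    exact: geq_minl.
  exact: leq_trans (geq_minr _ _) (IH H).
by apply: H; rewrite mem_index_enum.
Qed.

Lemma outdeg_le v : (outdeg e v <= #|V|)%N.
Proof. exact: max_card. Qed.

Lemma innb_sub (T T' : {set V}) w : T \subset T' -> (innb T w <= innb T' w)%N.
Proof.
move=> H; apply: subset_leq_card; apply/subsetP => a; rewrite !inE => /andP[Ha ->].
by rewrite (subsetP H a Ha).
Qed.

Lemma innb_diff (T T' : {set V}) w : (innb T' w <= innb T w + #|T' :\: T|)%N.
Proof.
rewrite /innb; apply: leq_trans (leq_card_setU _ _).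
apply: subset_leq_card; apply/subsetP => a; rewrite !inE => /andP[Ha ->].
by rewrite Ha; case: (a \in T).
Qed.

End Count.

Local Open Scope ring_scope.

Lemma t1 (R : realFieldType) (m dl n eps : R) : 0 < eps -> 0 <= n -> eps * n < dl -> dl / 2 < m ->
  m * dl <= dl / 2 * m + n * (eps ^+ 2 * n / 4) -> False.
Proof. move=> he hn h1 h2 h3.
have h0 : 0 <= eps * n by apply: mulr_ge0; lra.
have h4 : 0 < (m - dl/2) * dl by apply: mulr_gt0; lra.
have h5 : 0 < (dl - eps * n) * (dl + eps * n) by apply: mulr_gt0; lra.
nra. Qed.

Lemma t2 (R : realFieldType) (m dl n eps : R) : 0 < eps -> 0 < n -> eps * n < dl -> dl / 2 < m ->
  m * dl <= m * m + n * (eps ^+ 2 * n / 4) -> dl - eps * n / 2 <= m.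
Proof. move=> he hn h1 h2 h3.
rewrite leNgt; apply/negP => H.
have h0 : 0 < eps * n by apply: mulr_gt0.
have h4 : (dl/2) * (eps * n / 2) < m * (dl - m).
  apply: (@lt_le_trans _ _ (m * (eps * n / 2))).
    rewrite ltr_pM2r //; lra.
  rewrite ler_pM2l; lra.
have h5 : (eps * n / 2) * (eps * n / 2) < (dl/2) * (eps * n / 2).
  rewrite ltr_pM2r; lra.
nra. Qed.

Lemma num1 (R : realFieldType) (b q n kk : R) : 0 < q -> 0 < n -> 1 <= kk ->
  1800 * kk <= q * q * n -> b * (q * n / 32) <= n -> b <= q * n / 16.
Proof.
move=> hq hn hk h1 h2.
have h3 : b * q <= 32.
  have : (b * q) * n <= 32 * n by lra.
  by rewrite ler_pM2r.
rewrite leNgt; apply/negP => h4.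
have : q * n / 16 * q < b * q by rewrite ltr_pM2r.
nra.
Qed.

Lemma num2 (R : realFieldType) (b q n kk s i : R) : 0 < q -> q < 1 -> 0 < n -> 1 <= kk ->
  1800 * kk <= q * q * n -> b * (q * n / 32) <= n -> i * (q * n / 16) <= n ->
  s <= kk - 1 -> 0 <= i -> 0 <= b -> 0 <= s ->
  3 * (s + 2 * i + 4) + b + q * n / 32 <= q * n / 8.
Proof.
move=> hq hq1 hn hk h1 h2 h3 hs hi hb hs0.
have hb' : b * q <= 32.
  have : (b * q) * n <= 32 * n by lra.
  by rewrite ler_pM2r.
have hi' : i * q <= 16.
  have : (i * q) * n <= 16 * n by lra.
  by rewrite ler_pM2r.
have hsq : s * q <= kk - 1.
  nra.
have hq2 : 12 * q <= 12 by lra.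
rewrite -(ler_pM2r hq).
nra.
Qed.

Lemma num3 (R : realFieldType) (q n i : R) : 0 < q -> q < 1 -> 0 < n -> 
  i * (q * n / 16) <= n -> i + 3 <= 1280 / q.
Proof.
move=> hq hq1 hn h3.
have hi' : i * q <= 16.
  have : (i * q) * n <= 16 * n by lra.
  by rewrite ler_pM2r.
rewrite ler_pdivlMr //; lra.
Qed.

Section Main.
Variables (R : realFieldType) (V : finType) (e : rel V) (cv : V -> nat) (ce : V -> V -> nat).
Variables (eps : R) (k : nat).
Hypothesis Hprop : proper_total_colouring e cv ce.
Hypothesis Hinj : injective cv.
Hypothesis Heps : 0 < eps.
Hypothesis Hk : (1 <= k)%N.
Hypothesis Hdel : eps * #|V|%:R < (min_outdeg e)%:R.
Hypothesis HN : 1800 * k%:R / eps ^+ 4 <= #|V|%:R.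

Local Notation n := #|V|.
Local Notation dl := (min_outdeg e).
Local Notation nR := (#|V|%:R : R).
Local Notation dR := ((min_outdeg e)%:R : R).
Local Notation q := (eps ^+ 2).
Local Notation Gc := (eps ^+ 2 * nR / 4).
Local Notation G := (eps ^+ 2 * nR / 8).
Local Notation H := (eps ^+ 2 * nR / 16).
Local Notation Mu := (eps ^+ 2 * nR / 32).

Lemma dl_le_n : (dl <= n)%N.
Proof.
rewrite /min_outdeg; elim/big_rec: _ => // i m _ Hm.
exact: leq_trans (geq_minl _ _) (outdeg_le _ _).
Qed.

Lemma nR_gt0 : 0 < nR.
Proof.
have h := dl_le_n.
rewrite ltr0n lt0n; apply/negP => /eqP h0.
move: h; rewrite h0 leqn0 => /eqP hd.
by move: Hdel; rewrite hd h0 mulr0 ltxx.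
Qed.

Lemma dR_le_nR : dR <= nR.
Proof. by rewrite ler_nat dl_le_n. Qed.

Lemma eps_lt1 : eps < 1.
Proof.
have h1 := nR_gt0; have h2 := dR_le_nR; have h3 := Hdel.
have : eps * nR < 1 * nR by rewrite mul1r; exact: lt_le_trans h3 h2.
by rewrite ltr_pM2r.
Qed.

Lemma qqn : 1800 * k%:R <= q * q * nR.
Proof.
have e4 : 0 < eps ^+ 4 by rewrite exprn_gt0.
have := HN; rewrite ler_pdivrMr // => h.
have -> : q * q = eps ^+ 4 by rewrite -exprD.
by rewrite [eps ^+ 4 * _]mulrC.
Qed.

Lemma qn_gt0 : 0 < eps ^+ 2 * nR.
Proof. by apply: mulr_gt0; [rewrite exprn_gt0 | exact: nR_gt0]. Qed.

Lemma Gc_gt0 : 0 < Gc.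
Proof. have := qn_gt0; lra. Qed.

Lemma sum_split_bound (M D : {set V}) (c1 c2 : R) :
  (forall w, w \in D -> (innb e M w)%:R <= c1) ->
  (forall w, w \notin D -> (innb e M w)%:R <= c2) -> 0 <= c2 ->
  \sum_(w : V) ((innb e M w)%:R : R) <= #|D|%:R * c1 + nR * c2.
Proof.
move=> H1 H2 c2p.
rewrite (bigID (mem D)) /=.
apply: lerD.
  apply: le_trans (ler_sum _ (fun w Hw => H1 w Hw)) _.
  by rewrite sumr_const mulr_natl.
apply: le_trans (ler_sum _ (fun w Hw => H2 w Hw)) _.
rewrite (eq_bigl (fun w => w \in ~: D)); last by move=> w; rewrite inE.
rewrite sumr_const -[c2 *+ _]mulr_natl; apply: ler_wpM2r => //.
by rewrite ler_nat max_card.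
Qed.

Lemma sumdeg (M : {set V}) : #|M|%:R * dR <= \sum_(w : V) ((innb e M w)%:R : R).
Proof.
rewrite -natrM -natr_sum ler_nat.
have -> : (\sum_(w : V) innb e M w = \sum_(w in [set: V]) innb e M w)%N.
  by apply: eq_bigl => w; rewrite inE.
rewrite -dcount.
apply: leq_trans (_ : \sum_(v in M) dl <= _)%N.
  by rewrite sum_nat_const mulnC.
apply: leq_sum => v _.
apply: leq_trans (min_outdeg_le e v) _.
by rewrite /outdeg; apply: subset_leq_card; apply/subsetP => w; rewrite !inE.
Qed.

Definition closedb (D : {set V}) :=
  [forall w, (w \notin D) ==> ((innb e D w)%:R < Gc)].
Definition bigb (D : {set V}) := dR / 2 < (#|D|%:R : R).

Lemma closedP (D : {set V}) : reflect (forall w, w \notin D -> (innb e D w)%:R < Gc) (closedb D).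
Proof.
apply: (iffP forallP) => [h w hw|h w]; first by move: (h w); rewrite hw.
by apply/implyP => /h.
Qed.

Lemma closedT : closedb setT.
Proof. by apply/closedP => w; rewrite inE. Qed.

Lemma bigT : bigb setT.
Proof.
rewrite /bigb cardsT; have := nR_gt0; have := dR_le_nR => *; lra.
Qed.

Definition Mset := [arg min_(D < setT | closedb D && bigb D) #|D|].

Lemma M_spec : [/\ closedb Mset, bigb Mset &
   forall D, closedb D -> bigb D -> (#|Mset| <= #|D|)%N].
Proof.
rewrite /Mset; case: arg_minnP => [|D /andP[h1 h2] hmin]; first by rewrite closedT bigT.
split => // D' c b; apply: hmin; by rewrite c b.
Qed.

Lemma closedI D1 D2 : closedb D1 -> closedb D2 -> closedb (D1 :&: D2).
Proof.
move=> /closedP h1 /closedP h2; apply/closedP => w; rewrite inE negb_and => /orP[h|h].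
  apply: le_lt_trans (h1 _ h); rewrite ler_nat; apply: innb_sub; exact: subsetIl.
apply: le_lt_trans (h2 _ h); rewrite ler_nat; apply: innb_sub; exact: subsetIr.
Qed.

Lemma M_sub W : closedb W -> bigb (Mset :&: W) -> Mset \subset W.
Proof.
move=> cW bMW; case: M_spec => cM bM hmin.
have c := closedI cM cW.
have h := hmin _ c bMW.
have /eqP E : Mset :&: W == Mset by rewrite eqEcard subsetIl h.
by apply/setIidPl.
Qed.

Lemma M_indeg w : w \in Mset -> Gc <= (innb e Mset w)%:R.
Proof.
move=> wM; case: M_spec => /closedP cM bM hmin.
set D := [set w in Mset | Gc <= (innb e Mset w)%:R].
have hD : forall w, w \notin D -> (innb e Mset w)%:R < Gc.
  move=> u; rewrite inE negb_and => /orP[h|h]; first exact: cM.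
  by rewrite ltNge.
have cD : closedb D.
  apply/closedP => u hu; apply: le_lt_trans (hD _ hu).
  by rewrite ler_nat; apply: innb_sub; apply/subsetP => a; rewrite inE => /andP[].
have DM : D \subset Mset by apply/subsetP => a; rewrite inE => /andP[].
case bD : (bigb D).
  have h := hmin _ cD bD.
  have /eqP E : D == Mset by rewrite eqEcard DM h.
  have : w \in D by rewrite E.
  by rewrite inE => /andP[].
exfalso.
have H1 : forall u, u \in D -> ((innb e Mset u)%:R : R) <= #|Mset|%:R.
  move=> u _; rewrite ler_nat; apply: subset_leq_card; apply/subsetP => a.
  by rewrite inE => /andP[].
have hs := sum_split_bound H1 (fun u hu => ltW (hD u hu)) (ltW Gc_gt0).
have Hsum := sumdeg Mset.
move: bD; rewrite /bigb => /negbT; rewrite -leNgt => bD.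
have h1 : #|D|%:R * #|Mset|%:R <= dR / 2 * #|Mset|%:R.
  by apply: ler_wpM2r.
apply: (@t1 R (#|Mset|%:R) dR nR eps) => //.
apply: le_trans Hsum _; apply: le_trans hs _; lra.
Qed.

Definition Aset := [set y in Mset |
  (#|[set w in ~: Mset | e y w]|%:R : R) <= eps * nR / 2].

Lemma A_sub : Aset \subset Mset.
Proof. by apply/subsetP => a; rewrite inE => /andP[]. Qed.

Lemma A_card : dR - eps * nR <= #|Aset|%:R.
Proof.
case: M_spec => /closedP cM bM _.
have H1 : forall u, u \in Mset -> ((innb e Mset u)%:R : R) <= #|Mset|%:R.
  move=> u _; rewrite ler_nat; apply: subset_leq_card; apply/subsetP => a.
  by rewrite inE => /andP[].
have hs := sum_split_bound H1 (fun u hu => ltW (cM u hu)) (ltW Gc_gt0).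
have Hsum := sumdeg Mset.
have hm := @t2 R (#|Mset|%:R) dR nR eps Heps nR_gt0 Hdel bM (le_trans Hsum hs).
set f := fun v => #|[set w in ~: Mset | e v w]|.
have S1 : ((\sum_(v in Mset) f v)%N%:R : R) <= nR * Gc.
  rewrite /f dcount natr_sum.
  have hh : forall w, w \in ~: Mset -> ((innb e Mset w)%:R : R) <= Gc.
    by move=> w; rewrite inE => /cM /ltW.
  apply: le_trans (ler_sum _ hh) _.
  rewrite sumr_const -[Gc *+ _]mulr_natl; apply: ler_wpM2r; first exact: ltW Gc_gt0.
  by rewrite ler_nat max_card.
have S2 : #|Mset :\: Aset|%:R * (eps * nR / 2) <= ((\sum_(v in Mset) f v)%N%:R : R).
  rewrite natr_sum (big_setID Aset) /=.
  apply: le_trans (_ : _ <= \sum_(i in Mset :\: Aset) (f i)%:R) _; last first.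
    rewrite lerDr; apply: sumr_ge0 => *; exact: ler0n.
  have hh : forall v, v \in Mset :\: Aset -> eps * nR / 2 <= (f v)%:R.
    move=> v; rewrite !inE => /andP[hv hM]; move: hv; rewrite hM /= -ltNge.
    exact: ltW.
  apply: le_trans (ler_sum _ hh).
  by rewrite sumr_const mulr_natl.
have hc : #|Aset| = (#|Mset| - #|Mset :\: Aset|)%N.
  by rewrite -(cardsID Aset Mset) (setIidPr A_sub) addnK.
have hle : (#|Mset :\: Aset| <= #|Mset|)%N.
  by rewrite -(cardsID Aset Mset) leq_addl.
rewrite hc natrB //.
have en : 0 < eps * nR / 2 by have := mulr_gt0 Heps nR_gt0; lra.
have : #|Mset :\: Aset|%:R <= eps * nR / 2.
  rewrite -(ler_pM2r en); apply: le_trans S2 _; apply: le_trans S1 _.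
  rewrite expr2; lra.
lra.
Qed.

Definition Xs x := [set a in Mset | e x a].
Definition RN (T : {set V}) := [set w | G <= ((innb e T w)%:R : R)].
Fixpoint Tset x j := if j is j'.+1 then Xs x :|: RN (Tset x j') else Xs x.
Definition bad x u := [set a | e x a && e a u && (ce x a == ce a u)].
Definition Bs x := [set u | Mu <= ((#|bad x u|)%:R : R)].

Lemma X_big x : x \in Aset -> dR / 2 < #|Xs x|%:R.
Proof.
rewrite inE => /andP[_ hx].
have h := min_outdeg_le e x; rewrite (outdeg_split e x Mset) in h.
have : dR <= #|Xs x|%:R + #|[set w in ~: Mset | e x w]|%:R by rewrite -natrD ler_nat.
have := Hdel; lra.
Qed.

Lemma RN_mono (T T' : {set V}) : T \subset T' -> RN T \subset RN T'.
Proof.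
move=> hT; apply/subsetP => w; rewrite !inE => h; apply: le_trans h _.
by rewrite ler_nat innb_sub.
Qed.

Lemma T_sub x j : Tset x j \subset Tset x j.+1.
Proof.
elim: j => [|j IH] /=; first exact: subsetUl.
by apply: setUS; apply: RN_mono.
Qed.

Lemma X_T x j : Xs x \subset Tset x j.
Proof. by case: j => [|j] /=; [exact: subxx | exact: subsetUl]. Qed.

Lemma T_split x j a : a \in Tset x j.+1 -> a \in Xs x \/ a \in RN (Tset x j).
Proof. by rewrite /= inE => /orP. Qed.

Lemma stall x : exists2 i : nat, i%:R * H <= nR &
  (#|Tset x i.+1|%:R : R) < #|Tset x i|%:R + H.
Proof.
have Hp : 0 < H by have := qn_gt0; lra.
pose P := fun i => (#|Tset x i.+1|%:R : R) < #|Tset x i|%:R + H.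
have ex : exists i, P i.
  case: (boolP [exists i : 'I_n.+1, P i]) => [/existsP[i Pi]|hn]; first by exists i.
  exfalso.
  have step : forall i, (i < n.+1)%N -> (#|Tset x i|.+1 <= #|Tset x i.+1|)%N.
    move=> i hi; have : ~~ P i by move: hn; rewrite negb_exists => /forallP /(_ (Ordinal hi)).
    rewrite /P -leNgt => h.
    rewrite -(ltr_nat R); apply: lt_le_trans h; lra.
  have ind : forall j, (j <= n.+1)%N -> (j <= #|Tset x j|)%N.
    elim => [|j IH] hj //.
    apply: leq_ltn_trans (IH (ltnW hj)) (step j hj).
  have := ind n.+1 (leqnn _); rewrite leqNgt => /negP; apply.
  by rewrite ltnS max_card.
pose i := ex_minn ex.
have [Pi imin] : P i /\ (forall j, P j -> (i <= j)%N).
  by rewrite /i; case: ex_minnP => m hm hmin; split.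
exists i; last exact: Pi.
have ind : forall j, (j <= i)%N -> (#|Tset x 0|%:R : R) + j%:R * H <= #|Tset x j|%:R.
  elim => [|j IH] hj; first by rewrite mul0r addr0.
  have hP : ~~ P j by apply/negP => /imin; rewrite leqNgt hj.
  move: hP; rewrite /P -leNgt => h.
  have := IH (ltnW hj).
  have -> : (j.+1%:R : R) = j%:R + 1 by rewrite natr1.
  lra.
have := ind i (leqnn _).
have : (#|Tset x i|%:R : R) <= nR by rewrite ler_nat max_card.
have : 0 <= (#|Tset x 0|%:R : R) by exact: ler0n.
lra.
Qed.

Lemma bad_le1 x a : (#|[set u | e x a && e a u && (ce x a == ce a u)]| <= 1)%N.
Proof.
apply: leq_trans (card_inj_mem [:: ce x a] (@inj_out_edge V e cv ce Hprop a)).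
apply: subset_leq_card; apply/subsetP => u; rewrite !inE => /andP[/andP[_ ->] /eqP ->].
by rewrite eqxx.
Qed.

Lemma B_card x : #|Bs x|%:R * Mu <= nR.
Proof.
have h1 : ((\sum_(u : V) #|bad x u|)%N <= n)%N.
  have -> : (\sum_(u : V) #|bad x u| =
     \sum_(u in [set: V]) #|[set a in [set: V] | e x a && e a u && (ce x a == ce a u)]|)%N.
    by apply: eq_big => u; rewrite ?inE //; move=> _; apply: eq_card => a; rewrite !inE.
  under eq_bigr do rewrite card_sum.
  rewrite exchange_big /=.
  apply: leq_trans (_ : \sum_(a in [set: V]) 1 <= n)%N; last by rewrite sum1_card cardsT.
  apply: leq_sum => a _; rewrite -card_sum.
  apply: leq_trans (bad_le1 x a); apply: subset_leq_card; apply/subsetP => u.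
  by rewrite !inE.
apply: le_trans (_ : ((\sum_(u : V) #|bad x u|)%N%:R : R) <= nR); last by rewrite ler_nat.
rewrite natr_sum.
apply: le_trans (_ : \sum_(u in Bs x) ((#|bad x u|)%:R : R) <= _).
  rewrite mulr_natl -sumr_const; apply: ler_sum => u; rewrite inE; done.
rewrite [X in _ <= X](bigID (mem (Bs x))) /= lerDl; apply: sumr_ge0 => *; exact: ler0n.
Qed.

Lemma q_gt0 : 0 < q.
Proof. by rewrite exprn_gt0. Qed.

Lemma q_lt1 : q < 1.
Proof. have := eps_lt1; rewrite expr2 => h; have := Heps; nra. Qed.

Lemma b_bound x : (#|Bs x|%:R : R) <= q * nR / 16.
Proof.
apply: (num1 (kk := k%:R)) q_gt0 nR_gt0 _ qqn (B_card x).
by rewrite ler1n.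
Qed.

Lemma reach x : x \in Aset -> exists2 i : nat, i%:R * H <= nR & Mset \subset RN (Tset x i).
Proof.
move=> xA.
have [i hi hst] := stall x.
exists i => //.
set W := Tset x i.+1 :|: Bs x.
have hb := b_bound x.
have hWT : (#|W :\: Tset x i|%:R : R) < H + #|Bs x|%:R.
  have h1 : (#|W :\: Tset x i| <= #|Tset x i.+1 :\: Tset x i| + #|Bs x|)%N.
    apply: leq_trans (leq_card_setU _ _); apply: subset_leq_card.
    apply/subsetP => a; rewrite !inE => /andP[-> /orP[->|->]] //.
    by rewrite orbT.
  have h2 : #|Tset x i.+1 :\: Tset x i| = (#|Tset x i.+1| - #|Tset x i|)%N.
    by rewrite cardsD (setIidPr (T_sub x i)).
  have h3 : (#|Tset x i| <= #|Tset x i.+1|)%N by apply: subset_leq_card; exact: T_sub.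
  apply: le_lt_trans (_ : _ <= ((#|Tset x i.+1| - #|Tset x i|)%N%:R + #|Bs x|%:R : R)) _.
    by rewrite -natrD ler_nat -h2.
  rewrite natrB //; lra.
have cW : closedb W.
  apply/closedP => w hw.
  have h1 := innb_diff e (Tset x i) W w.
  have h2 : ((innb e (Tset x i) w)%:R : R) < G.
    have : w \notin RN (Tset x i).
      by move: hw; apply: contra => h; rewrite /W /= !in_setU h orbT.
    by rewrite inE -ltNge.
  apply: le_lt_trans (_ : _ <= ((innb e (Tset x i) w)%:R + #|W :\: Tset x i|%:R : R)) _.
    by rewrite -natrD ler_nat.
  lra.
have bMW : bigb (Mset :&: W).
  have h := X_big xA; rewrite /bigb; apply: lt_le_trans h _; rewrite ler_nat.
  apply: subset_leq_card; apply/subsetP => a ha.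
  have h1 : a \in Tset x i.+1 by rewrite (subsetP (X_T x i.+1)).
  have h2 : a \in Mset by move: ha; rewrite inE => /andP[].
  by rewrite in_setI h2 in_setU h1.
have MW := M_sub cW bMW.
apply/subsetP => w wM; rewrite inE.
have h1 := M_indeg wM.
have h2 := innb_diff e (Tset x i) Mset w.
have h3 : (#|Mset :\: Tset x i| <= #|W :\: Tset x i|)%N.
  by apply: subset_leq_card; apply: setSD.
have : ((innb e Mset w)%:R : R) <= (innb e (Tset x i) w)%:R + #|W :\: Tset x i|%:R.
  by rewrite -natrD ler_nat (leq_trans h2) // leq_add2l.
lra.
Qed.

Lemma avoid5 (N E1 E2 E3 E4 E5 : {set V}) :
  (#|E1| + #|E2| + #|E3| + #|E4| + #|E5| < #|N|)%N ->
  exists2 a, a \in N & a \notin E1 :|: E2 :|: E3 :|: E4 :|: E5.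
Proof.
move=> h; apply/subsetPn; apply/negP => hs.
have := subset_leq_card hs.
apply/negP; rewrite -ltnNge; apply: leq_ltn_trans h.
apply: leq_trans (leq_card_setU _ _) _; rewrite leq_add2r.
apply: leq_trans (leq_card_setU _ _) _; rewrite leq_add2r.
apply: leq_trans (leq_card_setU _ _) _; rewrite leq_add2r.
exact: leq_card_setU.
Qed.

Lemma cardE1 (F : seq nat) : (#|[set a | true && (cv a \in F)]| <= size F)%N.
Proof. by apply: card_inj_mem => a b _ _; apply: Hinj. Qed.

Lemma cardE2 u (F : seq nat) : (#|[set a | e a u && (ce a u \in F)]| <= size F)%N.
Proof. exact: card_inj_mem (@inj_in_edge V e cv ce Hprop u). Qed.

Lemma cardE3 x (F : seq nat) : (#|[set a | e x a && (ce x a \in F)]| <= size F)%N.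
Proof. exact: card_inj_mem (@inj_out_edge V e cv ce Hprop x). Qed.

Section Build.
Variables (x y : V) (S : seq nat) (i : nat).
Hypothesis HS : (size S < k)%N.
Hypothesis Hi : i%:R * H <= nR.

Lemma budget : ((3 * (size S + 2 * i + 4) + #|Bs x|)%N)%:R + Mu <= G.
Proof.
have h := num2 (b := #|Bs x|%:R) (kk := k%:R) (s := (size S)%:R) (i := i%:R) q_gt0 q_lt1
  nR_gt0 _ qqn (B_card x) Hi _ (ler0n _ _) (ler0n _ _) (ler0n _ _).
rewrite natrD (natrM R 3) natrD natrD (natrM R 2).
have h1 : (1 : R) <= k%:R by rewrite ler1n.
have h2 : ((size S)%:R : R) <= k%:R - 1.
  by rewrite lerBrDr natr1 ler_nat.
have := h h1 h2; lra.
Qed.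

Lemma pick_full u r (T : {set V}) :
  u \in RN T -> u \notin Bs x -> (size r <= i.+1)%N ->
  exists a, [/\ a \in T, e a u, a \notin Bs x,
     (cv a \notin Fb cv ce x S u r) && (ce a u \notin Fb cv ce x S u r) &
     (e x a -> (ce x a \notin Fb cv ce x S u r) && (ce x a != ce a u))].
Proof.
move=> hu hB hr.
set F := Fb cv ce x S u r.
have hF : (size F <= size S + 2 * i + 4)%N by rewrite /F size_Fb; clear -hr; lia.
have hbad : ((#|bad x u|)%:R : R) < Mu by move: hB; rewrite inE -ltNge.
have hc : (#|[set a | true && (cv a \in F)]| + #|[set a | e a u && (ce a u \in F)]| +
    #|[set a | e x a && (ce x a \in F)]| + #|bad x u| + #|Bs x| < #|[set a in T | e a u]|)%N.
  have hN : G <= ((#|[set a in T | e a u]|)%:R : R) by move: hu; rewrite inE.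
  have hbud := budget.
  have h1 := cardE1 F; have h2 := cardE2 u F; have h3 := cardE3 x F.
  rewrite -(ler_nat R) in h1; rewrite -(ler_nat R) in h2; rewrite -(ler_nat R) in h3.
  rewrite -(ltr_nat R) !natrD.
  have hF' : ((size F)%:R : R) <= ((size S + 2 * i + 4)%N)%:R by rewrite ler_nat.
  move: hbud hF'; rewrite natrD (natrM R 3) natrD natrD (natrM R 2) => hbud hF'.
  lra.
have [a ha hn] := avoid5 hc.
move: ha hn; rewrite !in_setU !negb_or !inE => /andP[aT au] /andP[/andP[/andP[/andP[h1 h2] h3] h4] h5].
exists a; split => //.
- by rewrite inE.
- by move: h1 h2; rewrite andTb au andTb => -> ->.
- move=> xa; move: h3; rewrite xa andTb => ->; rewrite andTb.
  by move: h4; rewrite xa au.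
Qed.

Lemma pick_simple u r (T : {set V}) :
  G <= ((innb e T u)%:R : R) -> (size r <= i.+1)%N ->
  exists a, [/\ a \in T, e a u, a \notin Bs x,
     cv a \notin Fb cv ce x S u r & ce a u \notin Fb cv ce x S u r].
Proof.
move=> hu hr.
set F := Fb cv ce x S u r.
have hF : (size F <= size S + 2 * i + 4)%N by rewrite /F size_Fb; clear -hr; lia.
have hc : (#|[set a | true && (cv a \in F)]| + #|[set a | e a u && (ce a u \in F)]| +
    #|(set0 : {set V})| + #|(set0 : {set V})| + #|Bs x| < #|[set a in T | e a u]|)%N.
  have hbud := budget.
  have h1 := cardE1 F; have h2 := cardE2 u F.
  rewrite -(ler_nat R) in h1; rewrite -(ler_nat R) in h2.
  rewrite -(ltr_nat R) !natrD !cards0.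
  have hF' : ((size F)%:R : R) <= ((size S + 2 * i + 4)%N)%:R by rewrite ler_nat.
  move: hbud hF'; rewrite natrD (natrM R 3) natrD natrD (natrM R 2) => hbud hF'.
  have := qn_gt0; have := ler0n R (size S); have := ler0n R i; move: hu; rewrite /innb ?mulr0n => hu hi0 hs0 hq; lra.
have [a ha hn] := avoid5 hc.
move: ha hn; rewrite !in_setU !negb_or !inE => /andP[aT au] /andP[/andP[/andP[/andP[h1 h2] _] _] h5].
exists a; split; [done|done|by rewrite inE|by move: h1; rewrite andTb|by move: h2; rewrite au andTb].
Qed.

Definition goodp (p : seq V) :=
  [/\ is_path e x p, last x p = y, rainbow_path cv ce x p, (size p <= i + 3)%N &
      all (fun c => c \notin S) (path_ecols ce x p) &&
      all (fun v => cv v \notin S) (interior x p)].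

Lemma build j : forall u r, u \in RN (Tset x j) -> u \notin Bs x ->
  Inv e cv ce x y S u r -> (size r + j <= i + 1)%N -> exists p, goodp p.
Proof.
elim: j => [|j IH] u r hu hB hI hs.
  have hr : (size r <= i.+1)%N by clear -hs; lia.
have [a [aT au aB /andP[h1 h2] h3]] := pick_full hu hB hr.
  have xa : e x a by move: aT; rewrite /= inE => /andP[].
  have /andP[h4 h5] := h3 xa.
  have [c1 c2 c3 c4] := Inv_close Hprop Hinj hI au xa h1 h2 h4 h5.
  exists [:: a, u & r]; split => //.
  have hsz : (size [:: a, u & r] = (size r).+2)%N by [].
  rewrite hsz; clear -hs; lia.
have hr : (size r <= i.+1)%N by clear -hs; lia.
have [a [aT au aB /andP[h1 h2] h3]] := pick_full hu hB hr.
case: (T_split aT) => [aX|aR].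
  have xa : e x a by move: aX; rewrite inE => /andP[].
  have /andP[h4 h5] := h3 xa.
  have [c1 c2 c3 c4] := Inv_close Hprop Hinj hI au xa h1 h2 h4 h5.
  exists [:: a, u & r]; split => //.
  have hsz : (size [:: a, u & r] = (size r).+2)%N by [].
  rewrite hsz; clear -hs; lia.
apply: (IH a (u :: r) aR aB (Inv_step Hprop hI au h1 h2)).
by rewrite /=; clear -hs; lia.
Qed.

End Build.

End Main.

Theorem mainTheorem7 (R : realFieldType) (eps : R) (k : nat)
    (V : finType) (e : rel V) (cv : V -> nat) (ce : V -> V -> nat) :
  0 < eps ->
  digraph e ->
  proper_total_colouring e cv ce ->
  rainbow_vertex_set cv ->
  1800 * k%:R / eps ^+ 4 <= #|V|%:R ->
  exists A : {set V},
    kd_connected e cv ce k (1280 / eps ^+ 2) A /\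
    (min_outdeg e)%:R - eps * #|V|%:R <= #|A|%:R.
Proof.
move=> Heps _ Hprop Hinj HN.
have hdn : ((min_outdeg e)%:R : R) <= #|V|%:R by rewrite ler_nat dl_le_n.
have hen : 0 <= eps * #|V|%:R by apply: mulr_ge0; [exact: ltW | exact: ler0n].
case: (posnP k) => [k0|Hk].
  exists setT; split; first by move=> S x y; rewrite k0 ltn0.
  rewrite cardsT; lra.
case: (lerP ((min_outdeg e)%:R) (eps * #|V|%:R)) => [hle|Hdel].
  exists set0; split; first by move=> S x y _; rewrite inE.
  rewrite cards0; lra.
exists (Aset e eps); split; last exact: A_card.
move=> S x y hS xA yA.
case: (eqVneq x y) => [<-|hxy].
  exists [::]; split => //=.
  apply: divr_ge0; [lra | exact: sqr_ge0].
have [i hi hMRN] := reach Hprop Heps Hk Hdel HN xA.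
have yM : y \in Mset e eps by rewrite (subsetP (A_sub e eps)).
have yR : y \in RN e eps (Tset e eps x i) by rewrite (subsetP hMRN).
have hI0 : Inv e cv ce x y S y [::].
  split => //=.
  by rewrite /cols /= inE (inj_eq Hinj).
have [p [p1 p2 p3 p4 p5]] : exists p, goodp e cv ce x y S i p.
  case hB : (y \in Bs e ce eps x).
    have hG : eps ^+ 2 * #|V|%:R / 8 <= ((innb e (Mset e eps) y)%:R : R).
      have := M_indeg Heps Hdel yM; have := qn_gt0 Heps Hdel; lra.
    have [a [aM ay aB h1 h2]] := pick_simple Hprop Hinj Heps Hk Hdel HN x hS hi hG (r := [::]) (isT : (size [::] <= i.+1)%N).
    have aR : a \in RN e eps (Tset e eps x i) by rewrite (subsetP hMRN).
    apply: (build Hprop Hinj Heps Hk Hdel HN hS hi aR aB (Inv_step Hprop hI0 ay h1 h2)).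
    by rewrite /= add1n addn1.
  apply: (build Hprop Hinj Heps Hk Hdel HN hS hi yR (negbT hB) hI0).
  by rewrite add0n leq_addr.
exists p; split => //.
have := num3 (q_gt0 Heps) (q_lt1 Heps Hdel) (nR_gt0 Hdel) hi.
have : ((size p)%:R : R) <= i%:R + 3%:R by rewrite -natrD ler_nat.
lra.
Qed.
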